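(* Let $D$ be an $m\times m$ differential matrix over a field $\mathbb F$ that is block-superdiagonal with respect to a partition of $\{1,\dots,m\}$ into consecutive intervals $I_1,\dots,I_k$ (in increasing order). Then there exist a nondegenerate filtered complex over $\mathbb F$ and an adapted basis of it, in which the basis elements indexed by $I_j$ have degree $j$ for each $j$, such that the matrix of the colimit boundary with respect to this adapted basis is $D$.
   Context: A differential matrix is a square matrix $D$ with $D^2=0$. It is block-superdiagonal with respect to the partition $I_1,\dots,I_k$ if $D_{ab}=0$ whenever $a\in I_i$, $b\in I_j$ with $j\ne i+1$. A complex is a family $(V_n,\partial_n)_{n\in\mathbb Z}$ of finite-dimensional $\mathbb F$-vector spaces with $\partial_n:V_n\to V_{n-1}$, $\partial_{n-1}\partial_n=0$, all but finitely many $\partial_n$ isomorphisms. A filtered complex is a family of complexes $({}_pV_\bullet)_{p\in\mathbb Z}$ with each ${}_pV_\bullet$ a subcomplex of ${}_{p+1}V_\bullet$, ${}_pV_\bullet=0$ for $p$ sufficiently small, and ${}_pV_\bullet={}_{p+1}V_\bullet$ for all but finitely many $p$; its colimit $V_\bullet$ is ${}_pV_\bullet$ for large $p$; $V=\bigoplus_nV_n$ and the colimit boundary is $\partial=\bigoplus_n\partial_n:V\to V$. A vector has pure degree $n$ if it lies in $V_n$; the level of a nonzero $v\in V_n$ is the least $p$ with $v\in{}_pV_n$. An adapted basis is a basis of $V$ such that (i) every element has pure degree; (ii) for all $n,p$, ${}_pV_n$ is spanned by the basis elements of degree $n$ and level $\le p$; (iii) the basis is ordered so that degree is nondecreasing and,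 within each degree, level is nondecreasing. The filtered complex is nondegenerate if $\dim{}_{p+1}V_n\le\dim{}_pV_n+1$ for all $p,n$. The matrix of $\partial$ has as column $j$ the coordinates of $\partial$ applied to the $j$-th basis element. *)

(* Defs.v *)
From HB Require Import structures.
From mathcomp Require Import all_boot all_order all_algebra.
Set Implicit Arguments. Unset Strict Implicit. Unset Printing Implicit Defensive.
Import Order.TTheory GRing.Theory Num.Theory.
Local Open Scope ring_scope.

(* The colimit complex V_bullet is modelled inside a finite-dimensional
   F-vector space vT, which plays the role of V = (+)_n V_n. *)

Definition iso_on (F : fieldType) (vT : vectType F) (d : 'End(vT))
  (A B : {vspace vT}) : Prop :=
  (d @: A)%VS = B /\ (lker d :&: A)%VS = 0%VS.

Definition is_subcomplex (F : fieldType) (vT : vectType F) (d : 'End(vT))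
  (W : int -> {vspace vT}) : Prop :=
  (forall n : int, (d @: W n <= W (n - 1)%R)%VS) /\
  exists N : nat, forall n : int, (N <= absz n)%N -> iso_on d (W n) (W (n - 1)).

Definition is_colim_complex (F : fieldType) (vT : vectType F)
  (V : int -> {vspace vT}) (d : 'End(vT)) : Prop :=
  is_subcomplex d V /\ (d \o d = 0)%VF /\
  exists s : seq int, uniq s /\ (forall n : int, n \notin s -> V n = 0%VS) /\
     directv (\sum_(n <- s) V n) /\ (\sum_(n <- s) V n)%VS = fullv.

(* FV p = pV_bullet : a filtered complex with colimit (V, d). *)
Definition filtered_complex (F : fieldType) (vT : vectType F)
  (V : int -> {vspace vT}) (FV : int -> int -> {vspace vT}) (d : 'End(vT)) : Prop :=
  is_colim_complex V d /\
  [/\ (forall p n, (FV p n <= V n)%VS),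
      (forall p, is_subcomplex d (FV p)),
      (forall p n, (FV p n <= FV (p + 1)%R n)%VS),
      (exists P0 : int, forall p n, p <= P0 -> FV p n = 0%VS) &
      (exists P1 : int, forall p n, P1 <= p -> FV p n = V n)].

Definition nondegenerate_filtered (F : fieldType) (vT : vectType F)
  (FV : int -> int -> {vspace vT}) : Prop :=
  forall p n, (\dim (FV (p + 1) n) <= (\dim (FV p n)).+1)%N.

Definition is_level (F : fieldType) (vT : vectType F)
  (FV : int -> int -> {vspace vT}) (n : int) (v : vT) (p : int) : Prop :=
  v \in FV p n /\ forall q, v \in FV q n -> p <= q.

Definition adapted_basis (F : fieldType) (vT : vectType F) (m : nat)
  (V : int -> {vspace vT}) (FV : int -> int -> {vspace vT})
  (b : 'I_m -> vT) (deg lvl : 'I_m -> int) : Prop :=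
  basis_of fullv (map b (enum 'I_m)) /\
  [/\ (forall i, b i \in V (deg i)),
      (forall i, is_level FV (deg i) (b i) (lvl i)),
      (forall p n, FV p n =
         span (map b (filter (fun i => (deg i == n) && (lvl i <= p)) (enum 'I_m)))),
      (forall i j : 'I_m, (i <= j)%N -> deg i <= deg j) &
      (forall i j : 'I_m, (i <= j)%N -> deg i = deg j -> lvl i <= lvl j)].

(* Partition of {0,..,m-1} into consecutive nonempty intervals
   I_j = [c (j-1), c j), j = 1..k, in increasing order. *)
Definition interval_partition (m k : nat) (c : nat -> nat) : Prop :=
  [/\ c 0%N = 0%N, c k = m & forall j, (j < k)%N -> (c j < c j.+1)%N].

Definition in_block (c : nat -> nat) (j a : nat) : bool := (c j.-1 <= a < c j)%N.

Definition differential_mx (F : fieldType) (m : nat) (D : 'M[F]_m) : Prop :=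
  D *m D = 0.

Definition block_superdiag (F : fieldType) (m k : nat) (c : nat -> nat)
  (D : 'M[F]_m) : Prop :=
  forall (a b : 'I_m) (i j : nat), (1 <= i <= k)%N -> (1 <= j <= k)%N ->
    in_block c i a -> in_block c j b -> j != i.+1 -> D a b = 0.

(* Main.v *)
Require Import Defs.
From HB Require Import structures.
From mathcomp Require Import all_boot all_order all_algebra.
From mathcomp Require Import zify.
Import Order.TTheory GRing.Theory Num.Theory.
Local Open Scope ring_scope.

Set Implicit Arguments. Unset Strict Implicit.
Section Proofs.
Variables (F : fieldType) (m k : nat) (c : nat -> nat) (D : 'M[F]_m).
Hypothesis Hc : interval_partition m k c.
Hypothesis HD : differential_mx D.
Hypothesis Hb : block_superdiag k c D.

Lemma c_mono i j : (i <= j)%N -> (j <= k)%N -> (c i <= c j)%N.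
Proof.
case: Hc => _ _ H.
elim: j => [|j IH]; first by rewrite leqn0 => /eqP ->.
rewrite leq_eqVlt => /orP[/eqP -> //|hij] hj.
apply: leq_trans (IH hij (ltnW hj)) _; exact: ltnW (H _ hj).
Qed.

Definition degn (a : nat) : nat := find (fun j => (a < c j)%N) (iota 0 k.+1).

Lemma degn_spec a : (a < m)%N ->
  [/\ (degn a <= k)%N, (a < c (degn a))%N & forall j, (j < degn a)%N -> (c j <= a)%N].
Proof.
move=> am; case: Hc => c0 ck _.
have hs : has (fun j => (a < c j)%N) (iota 0 k.+1).
  apply/hasP; exists k; first by rewrite mem_iota leq0n add0n ltnSn.
  by rewrite ck.
have hlt : (degn a < k.+1)%N by rewrite -[k.+1](size_iota 0) -has_find.
split; first by [].
  by have := nth_find 0 hs; rewrite nth_iota // add0n.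
move=> j hj; have := before_find 0 hj; rewrite nth_iota ?add0n.
  by move/negbT; rewrite -leqNgt.
exact: ltn_trans hj hlt.
Qed.

Lemma degn_ge1 a : (a < m)%N -> (1 <= degn a)%N.
Proof.
move=> am; case: (degn_spec am) => _ h _; case: Hc => c0 _ _.
by rewrite lt0n; apply/eqP => e; move: h; rewrite e c0.
Qed.

Lemma degn_block a : (a < m)%N -> in_block c (degn a) a.
Proof.
move=> am; case: (degn_spec am) => _ h1 h2; rewrite /in_block h1 andbT.
apply: h2; have := degn_ge1 am; case: (degn a) => //.
Qed.

Lemma degn_eq j a : (1 <= j <= k)%N -> in_block c j a -> degn a = j.
Proof.
move=> /andP[j1 jk] /andP[h1 h2].
case: Hc => _ ck _.
have am : (a < m)%N by rewrite -ck; apply: leq_trans h2 (c_mono jk _).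
case: (degn_spec am) => dk da db.
apply/eqP; rewrite eqn_leq; apply/andP; split.
  rewrite leqNgt; apply/negP => lt; have := db _ lt; by rewrite leqNgt h2.
rewrite leqNgt; apply/negP => lt.
have : (c (degn a) <= c j.-1)%N by apply: c_mono; [by case: j j1 lt {h1 h2 jk} => // | by apply: leq_trans (leq_pred _) jk].
move=> h; have := leq_trans da (leq_trans h h1); by rewrite ltnn.
Qed.

Lemma degn_mono a a' : (a <= a')%N -> (a' < m)%N -> (degn a <= degn a')%N.
Proof.
move=> aa am'; have am : (a < m)%N by apply: leq_ltn_trans aa am'.
case: (degn_spec am) => _ _ db; case: (degn_spec am') => _ da' _.
rewrite leqNgt; apply/negP => lt; have := db _ lt.
by rewrite leqNgt (leq_ltn_trans aa da').
Qed.

Lemma D_nz (a b : 'I_m) : D a b != 0 -> degn b = (degn a).+1.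
Proof.
move=> nz; apply/eqP; apply/negPn/negP => ne; move/eqP: nz; apply.
case: (degn_spec (ltn_ord a)) => ka _ _; case: (degn_spec (ltn_ord b)) => kb _ _.
apply: (Hb (i := degn a) (j := degn b)) => //.
- by rewrite degn_ge1.
- by rewrite degn_ge1.
- exact: degn_block.
- exact: degn_block.
Qed.

Lemma D_lt (a b : 'I_m) : D a b != 0 -> (a < b)%N.
Proof.
move=> nz; have e := D_nz nz.
case/andP: (degn_block (ltn_ord a)) => _ h1.
case/andP: (degn_block (ltn_ord b)) => h2 _.
by move: h2; rewrite e /= => h2; apply: leq_trans h1 h2.
Qed.

Definition bb (i : 'I_m) : 'rV[F]_m := delta_mx 0 i.
Definition W (Q : pred 'I_m) : {vspace 'rV[F]_m} := <<map bb (filter Q (enum 'I_m))>>%VS.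
Definition dd : 'End('rV[F]_m) := linfun (mulmxr D^T).
Definition deg (i : 'I_m) : int := (degn i)%:Z.
Definition lvl (i : 'I_m) : int := (i : nat)%:Z.

Lemma dd_b j : dd (bb j) = \sum_(i < m) D i j *: bb i.
Proof.
rewrite lfunE /= {1}(row_sum_delta (bb j *m D^T)).
by apply: eq_bigr => i _; rewrite -rowE !mxE.
Qed.

Lemma W_mem (Q : pred 'I_m) i : Q i -> bb i \in W Q.
Proof. by move=> Qi; apply: memv_span; apply: map_f; rewrite mem_filter Qi mem_enum. Qed.

Lemma W_sub (Q Q' : pred 'I_m) : (forall i, Q i -> Q' i) -> (W Q <= W Q')%VS.
Proof.
move=> H; apply: sub_span => x /mapP[i]; rewrite mem_filter => /andP[Qi _] ->.
by apply: map_f; rewrite mem_filter H // mem_enum.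
Qed.

Lemma W_eq (Q Q' : pred 'I_m) : Q =1 Q' -> W Q = W Q'.
Proof. by move=> H; rewrite /W (eq_filter H). Qed.

Lemma W_zero (Q : pred 'I_m) : (forall i, ~~ Q i) -> W Q = 0%VS.
Proof.
move=> H; rewrite /W (@eq_filter _ Q pred0) ?filter_pred0 ?span_nil //.
by move=> i; apply/negbTE.
Qed.

Lemma zero_lemma (Q : pred 'I_m) v : v \in W Q -> forall j, ~~ Q j -> v 0 j = 0.
Proof.
suff : (W Q <= lker (linfun (mulmxr (diag_mx (\row_j (~~ Q j)%:R : 'rV[F]_m)))))%VS.
  move=> /subvP H /H; rewrite memv_ker lfunE /= => /eqP /rowP e j nQ.
  by have := e j; rewrite mul_mx_diag !mxE nQ mulr1.
apply/span_subvP => x /mapP[i]; rewrite mem_filter => /andP[Qi _] ->.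
rewrite memv_ker lfunE /=; apply/eqP/rowP => j; rewrite mul_mx_diag !mxE.
case: (eqVneq j i) => [->|ne]; first by rewrite Qi mulr0.
by rewrite ?(negbTE ne) andbF mul0r.
Qed.

Lemma W_closed (Q Q' : pred 'I_m) (H : forall i j, D i j != 0 -> Q j -> Q' i) :
  (dd @: W Q <= W Q')%VS.
Proof.
rewrite limg_span; apply/span_subvP => x /mapP[y /mapP[j]].
rewrite mem_filter => /andP[Qj _] -> ->; rewrite dd_b; apply: memv_suml => i _.
have [->|nz] := eqVneq (D i j) 0; first by rewrite scale0r mem0v.
by apply: memvZ; apply: W_mem; apply: H nz Qj.
Qed.

Lemma deg_range i : 1 <= deg i /\ deg i <= k%:Z.
Proof.
case: (degn_spec (ltn_ord i)) => h _ _; have := degn_ge1 (ltn_ord i).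
rewrite /deg; lia.
Qed.

Lemma W_subcomplex (P : pred 'I_m) (HP : forall i j, D i j != 0 -> P j -> P i) :
  is_subcomplex dd (fun n => W (fun i => (deg i == n) && P i)).
Proof.
split.
  move=> n; apply: W_closed => i j nz /andP[/eqP dj Pj].
  rewrite (HP _ _ nz Pj) andbT -dj /deg (D_nz nz); apply/eqP; lia.
exists k.+2 => n hn.
rewrite !W_zero; first by split; [exact: limg0 | exact: capv0].
- by move=> i; apply/negP => /andP[/eqP e _]; have := deg_range i; lia.
- by move=> i; apply/negP => /andP[/eqP e _]; have := deg_range i; lia.
Qed.

End Proofs.
Unset Implicit Arguments.

Theorem lemma4p8 (F : fieldType) (m k : nat) (c : nat -> nat) (D : 'M[F]_m) :
  interval_partition m k c -> differential_mx D -> block_superdiag k c D ->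
  exists (vT : vectType F) (V : int -> {vspace vT})
         (FV : int -> int -> {vspace vT}) (d : 'End(vT))
         (b : 'I_m -> vT) (deg lvl : 'I_m -> int),
    [/\ filtered_complex V FV d,
        nondegenerate_filtered FV,
        adapted_basis V FV b deg lvl,
        (forall (j : nat) (a : 'I_m), (1 <= j <= k)%N -> in_block c j a ->
           deg a = j%:Z) &
        (forall j : 'I_m, d (b j) = \sum_(i < m) D i j *: b i)].
Proof.
move=> Hc HD Hb.
pose dg := @deg m k c. pose bs := bb F (m:=m).
pose V := fun n => W F (fun i => (dg i == n) && predT i).
pose FV := fun p n => W F (fun i => (dg i == n) && (lvl i <= p)).
exists [the vectType F of 'rV[F]_m], V, FV, (dd D), bs, dg, (@lvl m).
have Hlvl : forall i j, D i j != 0 -> lvl i < lvl j.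
  by move=> i j nz; have := D_lt Hc Hb nz; rewrite /lvl; lia.
split.
- split.
  + split; first exact: (W_subcomplex Hc Hb (P := predT)).
    split.
      apply/lfunP => v; rewrite comp_lfunE !lfunE /=. rewrite ?zero_lfunE ?lfunE /=.
      by rewrite -mulmxA -trmx_mul HD trmx0 mulmx0.
    have Ho : forall j : 'I_m, exists i0 : 'I_k, ((i0 : nat).+1)%:Z = dg j.
      move=> j; have := degn_ge1 Hc (ltn_ord j); case: (degn_spec Hc (ltn_ord j)) => dk _ _ g1.
      have lt : ((degn k c j).-1 < k)%N by lia.
      by exists (Ordinal lt); rewrite /dg /deg /=; congr Posz; lia.
    pose f := fun i : 'I_k => ((i : nat).+1)%:Z.
    have finj : injective f by move=> i j [e]; apply: val_inj.
    exists (map f (enum 'I_k)); split.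
      by rewrite map_inj_uniq ?enum_uniq.
    split.
      move=> n ns; apply: (W_zero F) => i; apply/negP => /andP[/eqP e _].
      move/negP: ns; apply; rewrite -e; case: (Ho i) => i0 <-.
      by apply: map_f; rewrite mem_enum.
    split.
      have H : directv (\sum_(i : 'I_k) V (f i)).
        apply/directv_sum_independent => us hus hsum i _.
        apply/rowP => j; rewrite mxE.
        case: (eqVneq (dg j) (f i)) => e.
          move: (congr1 (fun v : 'rV_m => v 0 j) hsum); rewrite /= summxE (bigD1 i) //=.
          rewrite big1 ?addr0 ?mxE // => i' ne; apply: (zero_lemma (hus i' isT)).
          rewrite andbT e; apply/negP => /eqP /finj /eqP; by rewrite eq_sym (negbTE ne).
        by apply: (zero_lemma (hus i isT)); rewrite andbT.
      move: H; rewrite !directvE /= big_map big_enum /= big_map big_enum /=.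
      done.
    apply/eqP; rewrite eqEsubv subvf /=.
    apply/subvP => v _; rewrite (row_sum_delta v); apply: memv_suml => j _; apply: memvZ.
    rewrite big_map big_enum /=; case: (Ho j) => i0 e.
    have Hj : bs j \in V (dg j) by apply: (W_mem F); rewrite eqxx.
    apply: subvP _ _ Hj; apply: (sumv_sup i0) => //; by rewrite /f e.
  + split.
    * by move=> p n; apply: (W_sub F) => i /andP[-> _].
    * move=> p; apply: (W_subcomplex Hc Hb (P := fun i => lvl i <= p)).
      by move=> i j nz hj; apply: le_trans hj; apply: ltW; apply: Hlvl.
    * by move=> p n; apply: (W_sub F) => i /andP[-> h] /=; rewrite /lvl in h *; lia.
    * exists (-1) => p n hp; apply: (W_zero F) => i; apply/negP => /andP[_ h].
      by rewrite /lvl in h; lia.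
    * exists m%:Z => p n hp; apply: (W_eq F) => i /=; congr (_ && _).
      by have := ltn_ord i; rewrite /lvl; lia.
- move=> p n.
  pose w := \sum_(i : 'I_m | lvl i == (p + 1)%R) bs i.
  have sub : (FV (p+1)%R n <= FV p n + <[w]>)%VS.
    apply/span_subvP => x /mapP[i]; rewrite mem_filter => /andP[/andP[/eqP e h] _] ->.
    case: (boolP (lvl i <= p)) => hp.
      apply: subvP (addvSl _ _) _ _; apply: (W_mem F); by rewrite e eqxx hp.
    move: hp; rewrite -ltNge => hp.
    have hi : lvl i = p + 1 by lia.
    have -> : w = bs i.
      rewrite /w (big_pred1 i) // => j /=; rewrite -hi; apply/eqP/eqP => [|-> //].
      by case => e'; apply: val_inj.
    apply: subvP (addvSr _ _) _ _; exact: memv_line.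
  apply: leq_trans (dimvS sub) _; apply: leq_trans (dimv_add_leqif _ _).1 _.
  by rewrite dim_vline; case: (w != 0) => /=; rewrite ?addn1 ?addn0 ?leqnSn.
- split.
    rewrite basisEdim size_map size_enum_ord dimvf dim_matrix mul1r leqnn andbT.
    apply/subvP => v _; rewrite (row_sum_delta v); apply: memv_suml => j _; apply: memvZ.
    by apply: memv_span; apply: map_f; exact: mem_enum.
  split.
  + by move=> i; apply: (W_mem F); rewrite eqxx.
  + move=> i; split; first by apply: (W_mem F); rewrite eqxx lexx.
    move=> q hq; case: (boolP (lvl i <= q)) => // nq.
    have := zero_lemma hq (j:=i); rewrite eqxx (negbTE nq) /= /bs /bb mxE !eqxx /= => /(_ isT) /eqP.
    by rewrite oner_eq0.
  + by [].
  + move=> i j ij; rewrite /dg /deg lez_nat; exact: (degn_mono Hc ij (ltn_ord j)).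
  + by move=> i j ij _; rewrite /lvl lez_nat.
- by move=> j a hj ha; rewrite /dg /deg (degn_eq Hc hj ha).
- exact: dd_b.
Qed.
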